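(* For $n\in\mathbb{Z}_+^I$, $j\in\mathcal{J}^\circ$ and $i\in\mathcal{I}$ with $j\in i$, $$E\,M^\circ_{ji}(n)=\frac{1}{\mu_{ji}}\frac{B^{+j}(n-e_i)}{B(n)},$$ where $e_i$ is the $i$-th unit vector.
   Context: Closed multiclass network: finite queue set $\mathcal{J}$, finite route set $\mathcal{I}$, each route a subset of $\mathcal{J}$ with a cyclic visiting order (each queue at most once), rates $\mu_{ji}>0$ for $j\in i$. For $k\in\mathbb{Z}_+^I$, $\mathcal{S}(k)$ is the set of $m=(m_{ji}: j\in i)$ with nonnegative integer entries and $\sum_{j\in i}m_{ji}=k_i$, $m_j=\sum_{i: j\in i}m_{ji}$; the stationary distribution is $\pi(m\mid k)=B(k)^{-1}\prod_{j}\big(\frac{m_j!}{\prod_{i: j\in i}m_{ji}!}\prod_{i: j\in i}\mu_{ji}^{-m_{ji}}\big)$ with normalizing constant $B(k)$. $\Lambda^*(n)$ is the unique optimizer of: maximize $\sum_i n_i\log\Lambda_i$ s.t. $\sum_{i: j\in i}\Lambda_i/\mu_{ji}\le1$ for all $j$, $\Lambda\ge0$, and $\mathcal{J}^\circ=\{j:\sum_{i: j\in i}\Lambda^*_i(n)/\mu_{ji}<1\}$. $M^\circ_{ji}(n)$ is the number of route-$i$ customers at queue $j$ under the stationary distribution $\pi(\cdot\mid n)$. $B^{+j}(k)$ is the normalizing constant (same formula) of the closed network obtained by adding a replica of queue $j$ immediately after $j$ on every route through $j$, with the same rates $\mu_{ji}$ at the replica. *)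

(* Defs.v *)
From HB Require Import structures.
From mathcomp Require Import all_boot all_order all_algebra.
From mathcomp Require Import reals exp.
Set Implicit Arguments. Unset Strict Implicit. Unset Printing Implicit Defensive.
Import Order.TTheory GRing.Theory Num.Theory.
Local Open Scope ring_scope.

(* A closed multiclass network: finite queue type Q, finite route type I,
   route i : {set Q} the queues visited by route i (each at most once; the
   cyclic visiting order does not enter any quantity below), rates mu q i. *)

Definition cfg_bound (I : finType) (k : I -> int) : nat := (\sum_i `|k i|)%N.

(* m : Q*I -> 'I_(K.+1) encodes (m_{qi}); membership in S(k). *)
Definition in_S (Q I : finType) (route : I -> {set Q}) (k : I -> int) (K : nat)
  (m : {ffun Q * I -> 'I_K.+1}) : bool :=
  [forall q, forall i, (q \notin route i) ==> (val (m (q, i)) == 0%N)] &&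
  [forall i, ((\sum_(q in route i) val (m (q, i)))%N)%:Z == k i].

Definition occ (Q I : finType) (route : I -> {set Q}) (K : nat)
  (m : {ffun Q * I -> 'I_K.+1}) (q : Q) : nat :=
  (\sum_(i | q \in route i) val (m (q, i)))%N.

Definition weight (R : realType) (Q I : finType) (route : I -> {set Q})
  (mu : Q -> I -> R) (K : nat) (m : {ffun Q * I -> 'I_K.+1}) : R :=
  \prod_q ( ((occ route m q)`!)%:R
            / (\prod_(i | q \in route i) ((val (m (q, i)))`!)%:R)
            * \prod_(i | q \in route i) (mu q i) ^- (val (m (q, i))) ).

(* normalizing constant B(k); S(k) is empty (B(k) = 0) if some k_i < 0 *)
Definition Bconst (R : realType) (Q I : finType) (route : I -> {set Q})
  (mu : Q -> I -> R) (k : I -> int) : R :=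
  \sum_(m : {ffun Q * I -> 'I_(cfg_bound k).+1} | in_S route k m) weight route mu m.

Definition natvec (I : finType) (n : I -> nat) : I -> int := fun i => (n i)%:Z.

Definition minus_e (I : finType) (n : I -> nat) (i : I) : I -> int :=
  fun i' => (n i')%:Z - (i' == i)%:Z.

Definition EM (R : realType) (Q I : finType) (route : I -> {set Q})
  (mu : Q -> I -> R) (n : I -> nat) (j : Q) (i : I) : R :=
  \sum_(m : {ffun Q * I -> 'I_(cfg_bound (natvec n)).+1} | in_S route (natvec n) m)
     (weight route mu m / Bconst route mu (natvec n)) * (val (m (j, i)))%:R.

(* network with a replica (None) of queue j inserted after j on every route through j *)
Definition plus_route (Q I : finType) (route : I -> {set Q}) (j : Q) :
  I -> {set option Q} :=
  fun i => (Some @: route i) :|: (if j \in route i then [set None] else set0).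

Definition plus_mu (R : realType) (Q I : finType) (mu : Q -> I -> R) (j : Q) :
  option Q -> I -> R :=
  fun q i => match q with Some q' => mu q' i | None => mu j i end.

Definition load (R : realType) (Q I : finType) (route : I -> {set Q})
  (mu : Q -> I -> R) (L : I -> R) (j : Q) : R :=
  \sum_(i | j \in route i) L i / mu j i.

Definition feasible (R : realType) (Q I : finType) (route : I -> {set Q})
  (mu : Q -> I -> R) (L : I -> R) : Prop :=
  (forall i, 0 <= L i) /\ (forall j, load route mu L j <= 1).

(* objective sum_i n_i log L_i; it is -oo when n_i > 0 and L_i = 0, so
   admissible points are feasible points with finite objective *)
Definition objective (R : realType) (I : finType) (n : I -> nat) (L : I -> R) : R :=
  \sum_i (n i)%:R * ln (L i).

Definition admissible (R : realType) (Q I : finType) (route : I -> {set Q})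
  (mu : Q -> I -> R) (n : I -> nat) (L : I -> R) : Prop :=
  feasible route mu L /\ (forall i, (0 < n i)%N -> 0 < L i).

Definition is_optimizer (R : realType) (Q I : finType) (route : I -> {set Q})
  (mu : Q -> I -> R) (n : I -> nat) (L : I -> R) : Prop :=
  admissible route mu n L /\
  (forall L', admissible route mu n L' -> objective n L' <= objective n L).

Definition in_Jcirc (R : realType) (Q I : finType) (route : I -> {set Q})
  (mu : Q -> I -> R) (n : I -> nat) (j : Q) : Prop :=
  exists L, is_optimizer route mu n L /\ load route mu L j < 1.

(* Main.v *)
Require Import Defs.
From HB Require Import structures.
From mathcomp Require Import all_boot all_order all_algebra.
From mathcomp Require Import reals exp.
From mathcomp Require Import ring zify.
From Stdlib Require Import FunctionalExtensionality.
Set Implicit Arguments. Unset Strict Implicit. Unset Printing Implicit Defensive.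
Import Order.TTheory GRing.Theory Num.Theory.
Local Open Scope ring_scope.

Lemma gvand (R : numFieldType) (I : finType) K (a : I -> nat) t :
  (forall r, (a r <= K)%N) ->
  \sum_(b : {ffun I -> 'I_K.+1} | (\sum_r val (b r) == t)%N)
     (\prod_r 'C(a r, b r))%:R = ('C(\sum_r a r, t))%:R :> R.
Proof.
move=> aK.
have W : forall r, ('X + 1 : {poly R}) ^+ a r = \sum_(k < K.+1) 'X^k *+ 'C(a r, k).
  move=> r; rewrite exprD1n (big_ord_widen _ (fun i => 'X^i *+ 'C(a r, i)) (aK r : (a r).+1 <= K.+1)%N).
  rewrite big_mkcond /=; apply: eq_bigr => k _.
  by case: ifP => //; rewrite ltnNge => /negbFE H; rewrite bin_small.
have E : ('X + 1 : {poly R}) ^+ (\sum_r a r) =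
   \sum_(b : {ffun I -> 'I_K.+1}) 'X^(\sum_r val (b r)) *+ \prod_r 'C(a r, b r).
  rewrite -prodrXr; under eq_bigr => r _ do rewrite W.
  rewrite bigA_distr_bigA; apply: eq_bigr => b _.
  by rewrite prodrMn prodrXr.
have := congr1 (fun p : {poly R} => p`_t) E.
rewrite exprD1n !coef_sum /=.
under eq_bigr => k _ do rewrite coefMn coefXn.
under [X in _ = X -> _]eq_bigr => b _ do rewrite coefMn coefXn.
have H1 : forall (b : bool) (c : nat), (b%:R *+ c : R) = if b then c%:R else 0.
  by case=> c; rewrite ?mul1rn ?mul0rn.
under eq_bigr => k _ do rewrite H1 eq_sym.
under [X in _ = X -> _]eq_bigr => b _ do rewrite H1 eq_sym.
rewrite -big_mkcond -[X in _ = X -> _]big_mkcond /= => <-.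
rewrite (big_ord1_eq _ (fun k => (('C(\sum_r a r, k))%:R : R))). 
by case: ltnP => // H; rewrite bin_small.
Qed.

Definition Mf (R : numFieldType) (I : finType) (v : I -> nat) : R :=
  ((\sum_r v r)`!)%:R / \prod_r ((v r)`!)%:R.

Lemma core (R : numFieldType) (I : finType) K (a : I -> nat) :
  (forall r, (a r <= K)%N) ->
  \sum_(b : {ffun I -> 'I_K.+1} | [forall r, (b r <= a r)%N])
     (Mf R (fun r => val (b r)) * Mf R (fun r => (a r - b r)%N)) =
  ((\sum_r a r).+1)%:R * Mf R a.
Proof.
move=> aK.
set A := (\sum_r a r)%N.
set P := \prod_r ((a r)`!)%:R : R.
have fn0 : forall n, (n`!)%:R != 0 :> R by move=> n; rewrite pnatr_eq0 -lt0n fact_gt0.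
have Pn0 : P != 0 by rewrite /P prodf_seq_neq0; apply/allP => r _; rewrite fn0.
pose c (b : {ffun I -> 'I_K.+1}) := (\prod_r 'C(a r, b r))%N.
pose f (s : nat) : R := (s`! * (A - s)`!)%:R.
have S1 : forall b : {ffun I -> 'I_K.+1}, [forall r, (b r <= a r)%N] ->
    Mf R (fun r => val (b r)) * Mf R (fun r => (a r - b r)%N) = (c b)%:R * f (\sum_r val (b r))%N / P.
  move=> b /forallP ba.
  have eA : (\sum_r (a r - b r) = A - \sum_r val (b r))%N by rewrite sumnB.
  have eP : P = (c b)%:R * \prod_r ((b r)`!)%:R * \prod_r ((a r - b r)`!)%:R.
    rewrite /P /c natr_prod -!big_split /=; apply: eq_bigr => r _.
    by rewrite -!natrM -mulnA bin_fact.
  have cn0 : (c b)%:R != 0 :> R.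
    rewrite /c natr_prod prodf_seq_neq0; apply/allP => r _.
    by rewrite pnatr_eq0 -lt0n bin_gt0 ba.
  have p1 : \prod_r ((b r)`!)%:R != 0 :> R by rewrite prodf_seq_neq0; apply/allP => r _; rewrite fn0.
  have p2 : \prod_r ((a r - b r)`!)%:R != 0 :> R by rewrite prodf_seq_neq0; apply/allP => r _; rewrite fn0.
  rewrite /Mf /= eA eP /f natrM; field.
  by rewrite cn0 p1 p2.
rewrite (eq_bigr _ S1) -mulr_suml.
have S2 : \sum_(b : {ffun I -> 'I_K.+1} | [forall r, (b r <= a r)%N]) (c b)%:R * f (\sum_r val (b r))%N =
          \sum_(b : {ffun I -> 'I_K.+1}) (c b)%:R * f (\sum_r val (b r))%N.
  rewrite [RHS](bigID (fun b : {ffun I -> 'I_K.+1} => [forall r, (b r <= a r)%N])) /=.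
  rewrite [X in _ = _ + X]big1 ?addr0 // => b /forallPn [r]; rewrite -ltnNge => H.
  by rewrite /c (bigD1 r) //= bin_small // mul0n mul0r.
rewrite S2.
have S3 : forall b : {ffun I -> 'I_K.+1}, (c b)%:R * f (\sum_r val (b r))%N =
    \sum_(t < A.+1 | (t == \sum_r val (b r) :> nat)%N) (c b)%:R * f t.
  move=> b; rewrite (big_ord1_eq _ (fun t => (c b)%:R * f t)).
  case: ltnP => // H; case: (boolP [forall r, (b r <= a r)%N]) => [/forallP ba|].
    by move: H; rewrite ltnNge (@leq_sum _ (index_enum I) predT (fun r => val (b r)) a (fun r _ => ba r)).
  move=> /forallPn [r]; rewrite -ltnNge => Hr.
  by rewrite /c (bigD1 r) //= bin_small // mul0n mul0r.
rewrite (eq_bigr _ (fun b _ => S3 b)) (exchange_big_dep xpredT) /= ; last by [].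
have S4 : forall t : 'I_A.+1, \sum_(b : {ffun I -> 'I_K.+1} | (t == \sum_r val (b r) :> nat)%N) (c b)%:R * f t = (A`!)%:R.
  move=> t; rewrite -mulr_suml.
  under eq_bigl => b do rewrite eq_sym.
  rewrite (gvand R t aK) /f -natrM -/A bin_fact //; exact: (ltn_ord t).
rewrite (eq_bigr _ (fun t _ => S4 t)) sumr_const card_ord /Mf -/A -/P.
by rewrite -mulr_natr; ring.
Qed.

Lemma big_option_split (T : Type) (idx : T) (op : Monoid.com_law idx) (J : finType) (j0 : J)
  (F : option J -> T) :
  \big[op/idx]_(x : option J) F x = op (F None) (\big[op/idx]_(q : J) F (Some q)).
Proof.
rewrite (bigD1 None) //=; congr (op _ _).
rewrite (reindex_onto Some (odflt j0)) /=; last by case.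
by apply: eq_bigl => q; rewrite eqxx.
Qed.

Lemma mem_plus_Some (J I : finType) (route : I -> {set J}) (j q : J) (r : I) :
  (Some q \in plus_route route j r) = (q \in route r).
Proof.
rewrite /plus_route in_setU (mem_imset _ _ (@Some_inj _)).
by case: ifP => _; rewrite ?in_set1 ?in_set0 orbF.
Qed.

Lemma mem_plus_None (J I : finType) (route : I -> {set J}) (j : J) (r : I) :
  (None \in plus_route route j r) = (j \in route r).
Proof.
rewrite /plus_route in_setU.
have -> : (None \in [set Some x | x in route r]) = false.
  by apply/imsetP => [[x _]].
by case: ifP => _; rewrite ?in_set1 ?in_set0.
Qed.

Lemma inS_nat (J I : finType) (route : I -> {set J}) (n : I -> nat) K
  (m : {ffun J * I -> 'I_K.+1}) :
  in_S route (natvec n) m =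
  [forall q, forall r, (q \notin route r) ==> (val (m (q, r)) == 0%N)] &&
  [forall r, (\sum_(q in route r) val (m (q, r)) == n r)%N].
Proof.
by rewrite /in_S /natvec; congr (_ && _).
Qed.

Lemma inS_bound (J I : finType) (route : I -> {set J}) (n : I -> nat) K
  (m : {ffun J * I -> 'I_K.+1}) q r :
  in_S route (natvec n) m -> (val (m (q, r)) <= n r)%N.
Proof.
rewrite inS_nat => /andP [/forallP H0 /forallP H1].
case: (boolP (q \in route r)) => qr.
  rewrite -(eqP (H1 r)) (bigD1 q) //=; exact: leq_addr.
by move: (H0 q) => /forallP /(_ r); rewrite qr /= => /eqP ->.
Qed.

Lemma plus_sum (J I : finType) (route : I -> {set J}) (j : J) K'
  (m' : {ffun option J * I -> 'I_K'.+1}) r :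
  (\sum_(x in plus_route route j r) val (m' (x, r)) =
  (if j \in route r then val (m' (None, r)) else 0) + \sum_(q in route r) val (m' (Some q, r)))%N.
Proof.
rewrite big_mkcond (big_option_split _ j) /= mem_plus_None; congr (_ + _)%N.
by rewrite [RHS]big_mkcond; apply: eq_bigr => q _; rewrite mem_plus_Some.
Qed.

Definition phi (J I : finType) (j : J) (i : I) K K' (m' : {ffun option J * I -> 'I_K'.+1}) :
  {ffun J * I -> 'I_K.+1} :=
  [ffun p => inord (if p.1 == j then (val (m' (Some j, p.2)) + val (m' (None, p.2)) + (p.2 == i))%N
                    else val (m' (Some p.1, p.2)))].

Definition psi (J I : finType) (j : J) (i : I) K K' (m : {ffun J * I -> 'I_K.+1})
  (b : {ffun I -> 'I_K'.+1}) : {ffun option J * I -> 'I_K'.+1} :=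
  [ffun p => inord (match p.1 with
                    | Some q => if q == j then val (b p.2) else val (m (q, p.2))
                    | None => (val (m (j, p.2)) - (p.2 == i) - b p.2)%N end)].

Definition nm (I : finType) (n : I -> nat) (i : I) : I -> nat := fun r => (n r - (r == i))%N.

Lemma nm_bound (I : finType) (n : I -> nat) (i : I) r :
  (0 < n i)%N -> (nm n i r <= (\sum_r n r).-1)%N.
Proof.
move=> hni; rewrite /nm (bigD1 i) //=.
case: (eqVneq r i) => [->|ri] /=.
  by have := leq_addr (\sum_(r0 | r0 != i) n r0) (n i); lia.
rewrite (bigD1 r) //=; lia.
Qed.

Lemma sum_nm (I : finType) (n : I -> nat) (i : I) :
  (0 < n i)%N -> (\sum_r nm n i r = (\sum_r n r).-1)%N.
Proof.
move=> hni; rewrite /nm (bigD1 i) //= [in RHS](bigD1 i) //= eqxx.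
rewrite (eq_bigr n); last by move=> r /negbTE ->; rewrite subn0.
lia.
Qed.

Lemma inS_zero (J I : finType) (route : I -> {set J}) (n : I -> nat) K
  (m : {ffun J * I -> 'I_K.+1}) q r :
  in_S route (natvec n) m -> q \notin route r -> val (m (q, r)) = 0%N.
Proof.
rewrite inS_nat => /andP [/forallP H0 _] qr.
by move: (H0 q) => /forallP /(_ r); rewrite qr /= => /eqP.
Qed.

Lemma inS_sum (J I : finType) (route : I -> {set J}) (n : I -> nat) K
  (m : {ffun J * I -> 'I_K.+1}) r :
  in_S route (natvec n) m -> (\sum_(q in route r) val (m (q, r)) = n r)%N.
Proof. by rewrite inS_nat => /andP [_ /forallP H1]; apply/eqP. Qed.

Lemma inS_bound2 (J I : finType) (route : I -> {set J}) (n : I -> nat) K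
  (m : {ffun J * I -> 'I_K.+1}) q j r :
  in_S route (natvec n) m -> j \in route r -> q != j ->
  (val (m (q, r)) + val (m (j, r)) <= n r)%N.
Proof.
move=> hm jr qj.
case: (boolP (q \in route r)) => qr; last first.
  by rewrite (inS_zero hm qr) add0n (inS_bound _ _ hm).
rewrite -(inS_sum r hm) (bigD1 q) //= (bigD1 j) /=; last by rewrite jr eq_sym qj.
lia.
Qed.

Lemma m_le_nm (J I : finType) (route : I -> {set J}) (n : I -> nat) K
  (m : {ffun J * I -> 'I_K.+1}) q j i r :
  in_S route (natvec n) m -> j \in route i -> q != j -> (0 < val (m (j, i)))%N ->
  (val (m (q, r)) <= nm n i r)%N.
Proof.
move=> hm ji qj ai; rewrite /nm.
case: (eqVneq r i) => [->|ri] /=.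
  have := inS_bound2 hm ji qj; move: ai => /= + /=; lia.
by rewrite subn0 (inS_bound _ _ hm).
Qed.

Lemma psi_val (J I : finType) (route : I -> {set J}) (n : I -> nat) K K'
  (m : {ffun J * I -> 'I_K.+1}) (b : {ffun I -> 'I_K'.+1}) j i x r :
  in_S route (natvec n) m -> j \in route i -> (0 < val (m (j, i)))%N -> (0 < n i)%N ->
  K' = (\sum_r n r).-1 ->
  val (psi j i m b (x, r)) =
  match x with Some q => if q == j then val (b r) else val (m (q, r))
             | None => (val (m (j, r)) - (r == i) - b r)%N end.
Proof.
move=> hm ji ai hni hK'; rewrite ffunE /= inordK //.
have hb := nm_bound r hni; rewrite -hK' in hb.
case: x => [q|]; last by have := inS_bound j r hm; rewrite /nm in hb; simpl in *; lia.
case: ifP => // /negbT qj.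
by have := m_le_nm r hm ji qj ai; simpl in *; lia.
Qed.

Lemma n_le_N (I : finType) (n : I -> nat) r : (n r <= \sum_r n r)%N.
Proof. by rewrite (bigD1 r) //= leq_addr. Qed.

Lemma plus_pair_bound (J I : finType) (route : I -> {set J}) (n : I -> nat) K'
  (m' : {ffun option J * I -> 'I_K'.+1}) j r :
  in_S (plus_route route j) (natvec n) m' -> j \in route r ->
  (val (m' (Some j, r)) + val (m' (None, r)) <= n r)%N.
Proof.
move=> hm jr; rewrite -(inS_sum r hm) plus_sum jr (bigD1 j) //=.
simpl in *; lia.
Qed.

Lemma plus_zero (J I : finType) (route : I -> {set J}) (n : I -> nat) K'
  (m' : {ffun option J * I -> 'I_K'.+1}) j r :
  in_S (plus_route route j) (natvec n) m' -> j \notin route r ->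
  val (m' (Some j, r)) = 0%N /\ val (m' (None, r)) = 0%N.
Proof.
move=> hm jr; split; apply: (inS_zero hm); by rewrite ?mem_plus_Some ?mem_plus_None.
Qed.

Lemma phi_val (J I : finType) (route : I -> {set J}) (n : I -> nat) K K'
  (m' : {ffun option J * I -> 'I_K'.+1}) j i q r :
  in_S (plus_route route j) (natvec (nm n i)) m' -> j \in route i -> (0 < n i)%N ->
  K = (\sum_r n r)%N ->
  val (phi j i K m' (q, r)) =
  if q == j then (val (m' (Some j, r)) + val (m' (None, r)) + (r == i))%N
  else val (m' (Some q, r)).
Proof.
move=> hm ji hni hK; rewrite ffunE /= inordK //.
have hN := n_le_N n r; rewrite -hK in hN.
case: ifP => _.
  case: (boolP (j \in route r)) => jr.
    have hri : ((r == i) <= n r)%N by case: (eqVneq r i) => [->|]. 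
    have := plus_pair_bound hm jr; rewrite /nm; simpl in *; lia.
  have [-> ->] := plus_zero hm jr.
  case: (eqVneq r i) => [ri|//]; by rewrite ri ji in jr.
have := inS_bound (Some q) r hm; rewrite /nm; simpl in *; lia.
Qed.

Lemma phi_inS (J I : finType) (route : I -> {set J}) (n : I -> nat) K K'
  (m' : {ffun option J * I -> 'I_K'.+1}) j i :
  in_S (plus_route route j) (natvec (nm n i)) m' -> j \in route i -> (0 < n i)%N ->
  K = (\sum_r n r)%N ->
  in_S route (natvec n) (phi j i K m').
Proof.
move=> hm ji hni hK; rewrite inS_nat; apply/andP; split.
  apply/forallP => q; apply/forallP => r; apply/implyP => qr.
  rewrite (phi_val q r hm ji hni hK); case: ifP => [/eqP qj|_].
    subst q; have [-> ->] := plus_zero hm qr.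
    by case: (eqVneq r i) => [ri|//]; rewrite ri ji in qr.
  by rewrite (inS_zero hm) // mem_plus_Some.
apply/forallP => r; apply/eqP.
have hs := inS_sum r hm; rewrite plus_sum in hs.
have hri : ((r == i) <= n r)%N by case: (eqVneq r i) => [->|].
case: (boolP (j \in route r)) => jr.
  rewrite (bigD1 j) //= (phi_val j r hm ji hni hK) eqxx.
  rewrite (eq_bigr (fun q => val (m' (Some q, r)))); last first.
    by move=> q /andP [_ /negbTE qj]; rewrite (phi_val q r hm ji hni hK) qj.
  rewrite jr (bigD1 j) //= in hs; rewrite /nm in hs; simpl in *; lia.
rewrite (eq_bigr (fun q => val (m' (Some q, r)))); last first.
  move=> q qr; rewrite (phi_val q r hm ji hni hK); case: eqP => // qj.
  by subst q; rewrite qr in jr.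
have ri : r != i by apply: contraNneq jr => ->.
by rewrite (negbTE jr) add0n /nm (negbTE ri) subn0 in hs.
Qed.

Definition hj (J I : finType) (j : J) K' (m' : {ffun option J * I -> 'I_K'.+1}) :
  {ffun I -> 'I_K'.+1} := [ffun r => m' (Some j, r)].

Lemma psi_inS (J I : finType) (route : I -> {set J}) (n : I -> nat) K K'
  (m : {ffun J * I -> 'I_K.+1}) (b : {ffun I -> 'I_K'.+1}) j i :
  in_S route (natvec n) m -> j \in route i -> (0 < val (m (j, i)))%N -> (0 < n i)%N ->
  K' = (\sum_r n r).-1 ->
  (forall r, (val (b r) <= val (m (j, r)) - (r == i))%N) ->
  in_S (plus_route route j) (natvec (nm n i)) (psi j i m b).
Proof.
move=> hm ji ai hni hK' hb.
have pv := fun x r => psi_val b x r hm ji ai hni hK'.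
rewrite inS_nat; apply/andP; split.
  apply/forallP => x; apply/forallP => r; apply/implyP => xr.
  rewrite pv; case: x xr => [q|].
    rewrite mem_plus_Some => qr; case: ifP => [/eqP qj|_]; last by rewrite (inS_zero hm qr).
    subst q; have := hb r; rewrite (inS_zero hm qr); simpl in *; lia.
  by rewrite mem_plus_None => jr; rewrite (inS_zero hm jr).
apply/forallP => r; apply/eqP; rewrite plus_sum.
have hs := inS_sum r hm.
have hri : ((r == i) <= val (m (j, r)))%N by case: (eqVneq r i) => [->|].
case: (boolP (j \in route r)) => jr.
  rewrite (bigD1 j) //= !pv /= eqxx.
  rewrite (eq_bigr (fun q => val (m (q, r)))); last first.
    by move=> q /andP [_ /negbTE qj]; rewrite pv qj.
  rewrite (bigD1 j) //= in hs; rewrite /nm; have := hb r; simpl in *; lia.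
rewrite (eq_bigr (fun q => val (m (q, r)))); last first.
  move=> q qr; rewrite pv; case: eqP => // qj.
  by subst q; rewrite qr in jr.
have ri : r != i by apply: contraNneq jr => ->.
by rewrite add0n hs /nm (negbTE ri) subn0.
Qed.

Lemma fibre_inv (J I : finType) (route : I -> {set J}) (n : I -> nat) K K'
  (m : {ffun J * I -> 'I_K.+1}) (m' : {ffun option J * I -> 'I_K'.+1}) j i :
  in_S route (natvec n) m -> j \in route i -> (0 < val (m (j, i)))%N -> (0 < n i)%N ->
  K = (\sum_r n r)%N -> K' = (\sum_r n r).-1 ->
  in_S (plus_route route j) (natvec (nm n i)) m' -> phi j i K m' = m ->
  psi j i m (hj j m') = m'.
Proof.
move=> hm ji ai hni hK hK' hm' hphi.
apply/ffunP => -[x r]; apply: val_inj => /=.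
rewrite (psi_val _ _ _ hm ji ai hni hK'); case: x => [q|].
  case: ifP => [/eqP -> | qj]; first by rewrite ffunE.
  by rewrite -hphi (phi_val _ _ hm' ji hni hK) qj.
rewrite -hphi (phi_val _ _ hm' ji hni hK) eqxx ffunE; simpl in *; lia.
Qed.

Lemma fibre_cond (J I : finType) (route : I -> {set J}) (n : I -> nat) K K'
  (m : {ffun J * I -> 'I_K.+1}) (b : {ffun I -> 'I_K'.+1}) j i :
  in_S route (natvec n) m -> j \in route i -> (0 < val (m (j, i)))%N -> (0 < n i)%N ->
  K = (\sum_r n r)%N -> K' = (\sum_r n r).-1 ->
  (in_S (plus_route route j) (natvec (nm n i)) (psi j i m b) && (phi j i K (psi j i m b) == m))
   && (hj j (psi j i m b) == b) =
  [forall r, (val (b r) <= val (m (j, r)) - (r == i))%N].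
Proof.
move=> hm ji ai hni hK hK'.
have pv := fun x r => psi_val b x r hm ji ai hni hK'.
apply/idP/idP.
  move=> /andP [/andP [hin /eqP hphi] _]; apply/forallP => r.
  have := congr1 (fun f : {ffun J * I -> 'I_K.+1} => val (f (j, r))) hphi.
  rewrite /= (phi_val _ _ hin ji hni hK) eqxx !pv eqxx; simpl in *; lia.
move=> /forallP hb.
have hin := psi_inS hm ji ai hni hK' hb.
rewrite hin /=; apply/andP; split; apply/eqP.
  apply/ffunP => -[q r]; apply: val_inj => /=.
  rewrite (phi_val _ _ hin ji hni hK) !pv eqxx.
  case: (eqVneq q j) => [->|qj]; last by [].
  have hri : ((r == i) <= val (m (j, r)))%N by case: (eqVneq r i) => [->|].
  have := hb r; simpl in *; lia.
apply/ffunP => r; apply: val_inj; rewrite ffunE /= pv eqxx //.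
Qed.

Definition fac (R : realType) (I : finType) (T : pred I) (nu : I -> R) (v : I -> nat) : R :=
  ((\sum_(r | T r) v r)`!)%:R / (\prod_(r | T r) ((v r)`!)%:R) * \prod_(r | T r) nu r ^- v r.

Lemma big_out (T : Type) (idx : T) (op : Monoid.com_law idx) (I : finType) (P : pred I) F :
  (forall r, ~~ P r -> F r = idx) -> \big[op/idx]_(r | P r) F r = \big[op/idx]_r F r.
Proof.
move=> H; rewrite big_mkcond; apply: eq_bigr => r _.
by case: (boolP (P r)) => // /H ->.
Qed.

Lemma fac_all (R : realType) (I : finType) (T : pred I) (nu : I -> R) (v : I -> nat) :
  (forall r, ~~ T r -> v r = 0%N) -> fac T nu v = Mf R v * \prod_r nu r ^- v r.
Proof.
move=> H; have e0 : (\sum_(r | T r) v r = \sum_r v r)%N by apply: big_out.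
rewrite /fac /Mf e0.
have e1 : \prod_(r | T r) ((v r)`!)%:R = \prod_r ((v r)`!)%:R :> R.
  by apply: big_out => r /H ->.
have e2 : \prod_(r | T r) nu r ^- v r = \prod_r nu r ^- v r.
  by apply: big_out => r /H ->; rewrite expr0 invr1.
by rewrite e1 e2.
Qed.

Lemma comb (R : realType) (I : finType) K' (T : pred I) (nu : I -> R) (a : I -> nat) i :
  T i -> nu i != 0 -> (0 < a i)%N -> (forall r, ~~ T r -> a r = 0%N) ->
  (forall r, (a r - (r == i) <= K')%N) ->
  \sum_(b : {ffun I -> 'I_K'.+1} | [forall r, (val (b r) <= a r - (r == i))%N])
     (fac T nu (fun r => val (b r)) * fac T nu (fun r => a r - (r == i) - b r)%N)
  = nu i * (fac T nu a * (a i)%:R).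
Proof.
move=> Ti nui ai aT aK.
pose a' r := (a r - (r == i))%N.
have a'T : forall r, ~~ T r -> a' r = 0%N by move=> r /aT; rewrite /a' => ->.
have S1 : forall b : {ffun I -> 'I_K'.+1}, [forall r, (val (b r) <= a r - (r == i))%N] ->
   fac T nu (fun r => val (b r)) * fac T nu (fun r => a r - (r == i) - b r)%N =
   (Mf R (fun r => val (b r)) * Mf R (fun r => (a' r - b r)%N)) * \prod_r nu r ^- a' r.
  move=> b /forallP hb.
  rewrite (@fac_all R I T nu (fun r => val (b r))); last first.
    by move=> r /a'T; have := hb r; rewrite -/(a' r); lia.
  rewrite (@fac_all R I T nu (fun r => (a r - (r == i) - b r)%N)); last first.
    by move=> r /a'T; rewrite /a'; lia.
  rewrite -/a' mulrACA; congr (_ * _); rewrite -big_split /=; apply: eq_bigr => r _.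
  by rewrite -invfM -exprD subnKC // hb.
rewrite (eq_bigr _ S1) -mulr_suml (core R aK).
rewrite (@fac_all R I T nu a aT).
have eA : (\sum_r a r = (\sum_r a' r).+1)%N.
  rewrite (bigD1 i) //= [in RHS](bigD1 i) //= /a' eqxx.
  have e : (\sum_(r | r != i) (a r - (r == i)) = \sum_(r | r != i) a r)%N.
    by apply: eq_bigr => r /negbTE ->; rewrite subn0.
  rewrite e; have := ai; simpl in *; lia.
have eP : \prod_r ((a r)`!)%:R = (a i)%:R * \prod_r ((a' r)`!)%:R :> R.
  rewrite (bigD1 i) //= [in RHS](bigD1 i) //= /a' eqxx mulrA.
  have e : \prod_(r | r != i) ((a r - (r == i))`!)%:R = \prod_(r | r != i) ((a r)`!)%:R :> R.
    by apply: eq_bigr => r /negbTE ->; rewrite subn0.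
  rewrite e.
  have fa : ((a i)`! = a i * ((a i).-1)`!)%N by case: (a i) ai => // k _; rewrite factS.
  by rewrite -natrM /= subn1 -fa.
have eX : \prod_r nu r ^- a r = (nu i)^-1 * \prod_r nu r ^- a' r.
  rewrite (bigD1 i) //= [in RHS](bigD1 i) //= /a' eqxx mulrA.
  have e : \prod_(r | r != i) nu r ^- (a r - (r == i)) = \prod_(r | r != i) nu r ^- a r.
    by apply: eq_bigr => r /negbTE ->; rewrite subn0.
  rewrite e.
  by rewrite -invfM -exprS /= subn1 prednK.
have fn0 : forall n, (n`!)%:R != 0 :> R by move=> n; rewrite pnatr_eq0 -lt0n fact_gt0.
have Pn0 : \prod_r ((a' r)`!)%:R != 0 :> R by rewrite prodf_seq_neq0; apply/allP => r _; rewrite fn0.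
have ain0 : (a i)%:R != 0 :> R by rewrite pnatr_eq0 -lt0n.
rewrite /Mf eA eP eX factS natrM -/a'.
field.
by rewrite Pn0 ain0 nui.
Qed.

Lemma weightE (R : realType) (J I : finType) (route : I -> {set J}) (mu : J -> I -> R) K
  (m : {ffun J * I -> 'I_K.+1}) :
  weight route mu m = \prod_q fac (fun r => q \in route r) (mu q) (fun r => val (m (q, r))).
Proof. by []. Qed.

Lemma fac_ext (R : realType) (I : finType) (T T' : pred I) (nu nu' : I -> R) (v v' : I -> nat) :
  (forall r, T r = T' r) -> (forall r, T' r -> nu r = nu' r) -> (forall r, T' r -> v r = v' r) ->
  fac T nu v = fac T' nu' v'.
Proof.
move=> HT Hn Hv; rewrite /fac !(eq_bigl _ _ HT).
have e1 : (\sum_(r | T' r) v r = \sum_(r | T' r) v' r)%N by apply: eq_bigr.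
have e2 : \prod_(r | T' r) ((v r)`!)%:R = \prod_(r | T' r) ((v' r)`!)%:R :> R.
  by apply: eq_bigr => r /Hv ->.
have e3 : \prod_(r | T' r) nu r ^- v r = \prod_(r | T' r) nu' r ^- v' r.
  by apply: eq_bigr => r Tr; rewrite Hn // Hv.
by rewrite e1 e2 e3.
Qed.

Lemma wsplit (R : realType) (J I : finType) (route : I -> {set J}) (mu : J -> I -> R) K
  (m : {ffun J * I -> 'I_K.+1}) j :
  weight route mu m = fac (fun r => j \in route r) (mu j) (fun r => val (m (j, r))) *
    \prod_(q | q != j) fac (fun r => q \in route r) (mu q) (fun r => val (m (q, r))).
Proof. by rewrite weightE (bigD1 j). Qed.

Lemma wpsi (R : realType) (J I : finType) (route : I -> {set J}) (mu : J -> I -> R)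
  (n : I -> nat) K K' (m : {ffun J * I -> 'I_K.+1}) (b : {ffun I -> 'I_K'.+1}) j i :
  in_S route (natvec n) m -> j \in route i -> (0 < val (m (j, i)))%N -> (0 < n i)%N ->
  K' = (\sum_r n r).-1 ->
  weight (plus_route route j) (plus_mu mu j) (psi j i m b) =
  fac (fun r => j \in route r) (mu j) (fun r => val (b r)) *
  fac (fun r => j \in route r) (mu j) (fun r => val (m (j, r)) - (r == i) - b r)%N *
  \prod_(q | q != j) fac (fun r => q \in route r) (mu q) (fun r => val (m (q, r))).
Proof.
move=> hm ji ai hni hK'.
have pv := fun x r => psi_val b x r hm ji ai hni hK'.
rewrite weightE (big_option_split _ j) (bigD1 j) //=.
have eN : fac (fun r => None \in plus_route route j r) (plus_mu mu j None)
     (fun r => val (psi j i m b (None, r))) =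
   fac (fun r => j \in route r) (mu j) (fun r => (val (m (j, r)) - (r == i) - b r)%N).
  apply: fac_ext; [by move=> r; rewrite mem_plus_None | by [] | by move=> r _; rewrite pv].
have eS : fac (fun r => Some j \in plus_route route j r) (plus_mu mu j (Some j))
     (fun r => val (psi j i m b (Some j, r))) =
   fac (fun r => j \in route r) (mu j) (fun r => val (b r)).
  apply: fac_ext; [by move=> r; rewrite mem_plus_Some | by [] | by move=> r _; rewrite pv eqxx].
rewrite eN eS.
rewrite (eq_bigr (fun q => fac (fun r => q \in route r) (mu q) (fun r => val (m (q, r))))).
  by rewrite mulrA [X in X * _]mulrC.
move=> q qj; apply: fac_ext.
- by move=> r; rewrite mem_plus_Some.
- by [].
- by move=> r _; rewrite pv (negbTE qj).
Qed.

Lemma fibre_sum (R : realType) (J I : finType) (route : I -> {set J}) (mu : J -> I -> R)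
  (n : I -> nat) K K' (m : {ffun J * I -> 'I_K.+1}) j i :
  in_S route (natvec n) m -> j \in route i -> (0 < n i)%N ->
  K = (\sum_r n r)%N -> K' = (\sum_r n r).-1 -> mu j i != 0 ->
  \sum_(m' : {ffun option J * I -> 'I_K'.+1} |
        in_S (plus_route route j) (natvec (nm n i)) m' && (phi j i K m' == m))
     weight (plus_route route j) (plus_mu mu j) m' =
  mu j i * (weight route mu m * (val (m (j, i)))%:R).
Proof.
move=> hm ji hni hK hK' mu0.
case: (posnP (val (m (j, i)))) => [a0|ai].
  rewrite a0 mulr0 mulr0 big_pred0 // => m'.
  apply/negP => /andP [hin /eqP hphi].
  have := congr1 (fun f : {ffun J * I -> 'I_K.+1} => val (f (j, i))) hphi.
  rewrite /= (phi_val _ _ hin ji hni hK) eqxx eqxx a0 /=; lia.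
rewrite (reindex_onto (@psi J I j i K K' m) (@hj J I j K')); last first.
  by move=> m' /andP [hin /eqP hphi]; apply: (fibre_inv hm ji ai hni hK hK' hin hphi).
rewrite (eq_bigl _ _ (fun b => fibre_cond b hm ji ai hni hK hK')).
rewrite (eq_bigr _ (fun b _ => wpsi mu b hm ji ai hni hK')) -mulr_suml.
have aT : forall r, ~~ (j \in route r) -> val (m (j, r)) = 0%N by move=> r; apply: inS_zero hm.
have aK : forall r, (val (m (j, r)) - (r == i) <= K')%N.
  move=> r; have := nm_bound r hni; rewrite /nm -hK'; have := inS_bound j r hm.
  simpl in *; lia.
rewrite (@comb R I K' (fun r => j \in route r) (mu j) (fun r => val (m (j, r))) i ji mu0 ai aT aK) (@wsplit R J I route mu K m j).
ring.
Qed.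

Lemma cfg_natvec (I : finType) (n : I -> nat) : cfg_bound (natvec n) = (\sum_r n r)%N.
Proof. by []. Qed.

Lemma main_nat (R : realType) (J I : finType) (route : I -> {set J}) (mu : J -> I -> R)
  (n : I -> nat) j i :
  j \in route i -> (0 < n i)%N -> mu j i != 0 ->
  Bconst (plus_route route j) (plus_mu mu j) (natvec (nm n i)) =
  mu j i * \sum_(m : {ffun J * I -> 'I_(cfg_bound (natvec n)).+1} | in_S route (natvec n) m)
              (weight route mu m * (val (m (j, i)))%:R).
Proof.
move=> ji hni mu0.
have hK := cfg_natvec n.
have hK' : cfg_bound (natvec (nm n i)) = (\sum_r n r).-1 by rewrite cfg_natvec sum_nm.
rewrite /Bconst (partition_big (@phi J I j i (cfg_bound (natvec n)) (cfg_bound (natvec (nm n i)))) (fun m => @in_S J I route (natvec n) (cfg_bound (natvec n)) m)); last first.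
  by move=> m' hm'; apply: phi_inS.
rewrite mulr_sumr; apply: eq_bigr => m hm.
exact: fibre_sum.
Qed.

Lemma lemma6 (R : realType) (J I : finType) (route : I -> {set J})
  (mu : J -> I -> R) (mu_pos : forall j i, j \in route i -> 0 < mu j i)
  (n : I -> nat) (j : J) (i : I)
  (hJ : in_Jcirc route mu n j) (hji : j \in route i) :
  EM route mu n j i =
  (mu j i)^-1 * (Bconst (plus_route route j) (plus_mu mu j) (minus_e n i)
                 / Bconst route mu (natvec n)).
Proof.
have mu0 : mu j i != 0 by rewrite gt_eqF // mu_pos.
have EME : EM route mu n j i = (\sum_(m : {ffun J * I -> 'I_(cfg_bound (natvec n)).+1} | in_S route (natvec n) m)
              (weight route mu m * (val (m (j, i)))%:R)) / Bconst route mu (natvec n).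
  by rewrite /EM mulr_suml; apply: eq_bigr => m _; rewrite mulrAC.
rewrite EME.
case: (posnP (n i)) => [n0|hni].
  have -> : Bconst (plus_route route j) (plus_mu mu j) (minus_e n i) = 0.
    rewrite /Bconst big_pred0 // => m'; apply/negP; rewrite /in_S => /andP [_ /forallP /(_ i)].
    by rewrite /minus_e n0 eqxx.
  rewrite big1 ?mul0r ?mulr0 // => m hm.
  by have := inS_bound j i hm; rewrite n0 leqn0 => /eqP ->; rewrite mulr0.
have -> : minus_e n i = natvec (nm n i).
  apply: functional_extensionality => r; rewrite /minus_e /natvec /nm subzn //.
  by case: (eqVneq r i) => [->|].
rewrite (main_nat hji hni mu0).
by rewrite mulrA mulrA mulVf // mul1r.
Qed.
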